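(* Let $M$ be a $\lambda$-term. (1) (CbN) If $M\to_\beta M'$ then $M^n\to_v M'^n$ (hence $M^n\to_b M'^n$). Conversely, if $M^n\to_b S$ then $M^n\to_v S$, and there is a $\lambda$-term $M'$ with $S=M'^n$ and $M\to_\beta M'$. (2) (Ground CbN) If $M\to_{w\beta} M'$ then $M^n\to_{wv} M'^n$ (hence $M^n\to_{wb} M'^n$). Conversely, if $M^n\to_{wb} S$ then $M^n\to_{wv} S$, and there is a $\lambda$-term $M'$ with $S=M'^n$ and $M\to_{w\beta} M'$. (3) (CbV) If $M\to_{\beta_v} M'$ then there is $S_0$ with $M^v\to_d S_0\to_v M'^v$ (hence $M^v\to_b\to_b M'^v$). Conversely, if $M^v\to_d S_0\to_v S$ for some $S_0,S$, then there is a $\lambda$-term $M'$ with $S=M'^v$ and $M\to_{\beta_v}M'$. (4) (Ground CbV) If $M\to_{w\beta_v} M'$ then there is $S_0$ with $M^v\to_{wd} S_0\to_{wv} M'^v$ (hence $M^v\to_{wb}\to_{wb} M'^v$). Conversely, if $M^v\to_{wd} S_0\to_{wv} S$ for some $S_0,S$, then there is a $\lambda$-term $M'$ with $S=M'^v$ and $M\to_{w\beta_v}M'$.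
   Context: Bang calculus. Fix a countably infinite set of variables. The set $!\Lambda$ of terms is $T,S,R ::= x \mid \lambda x.T \mid T\,S \mid \mathrm{der}\,T \mid\ !T$ (variable, abstraction, application, dereliction, box); $\lambda$ is the only binder, terms are taken up to $\alpha$-conversion, and $T\{S/x\}$ is capture-avoiding substitution (so $(!T)\{S/x\}=\,!(T\{S/x\})$). Contexts: $C ::= [\cdot] \mid \lambda x.C \mid C\,T \mid T\,C \mid \mathrm{der}\,C \mid\ !C$; ground contexts: $W ::= [\cdot] \mid \lambda x.W \mid W\,T \mid T\,W \mid \mathrm{der}\,W$. Root steps: $(\lambda x.T)(!S)\mapsto_v T\{S/x\}$, $\mathrm{der}(!T)\mapsto_d T$, and $\mapsto_b\,=\,\mapsto_v\cup\mapsto_d$. For $r\in\{v,d,b\}$, $T\to_r S$ iff $T=C[T']$, $S=C[S']$ for some context $C$ and $T'\mapsto_r S'$; $T\to_{wr}S$ is defined in the same way but with ground contexts $W$ only. $\lambda$-calculus. $\lambda$-terms: $M,N ::= V \mid M\,N$, values $V ::= x \mid \lambda x.M$. $\lambda$-contexts $C ::= [\cdot]\mid \lambda x.C\mid C\,M\mid M\,C$; CbN ground contexts $N ::= [\cdot]\mid\lambda x.N\mid N\,M$; CbV ground contexts $V ::= [\cdot]\mid V\,M\mid M\,V$. Root steps $(\lambda x.M)N\mapsto_\beta M\{N/x\}$ and $(\lambda x.M)V\mapsto_{\beta_v} M\{V/x\}$ for $V$ a value. $\to_\beta,\to_{\beta_v}$ are closures of these under $\lambda$-contexts; $\to_{w\beta}$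 is the closure of $\mapsto_\beta$ under CbN ground contexts; $\to_{w\beta_v}$ is the closure of $\mapsto_{\beta_v}$ under CbV ground contexts. Translations $\Lambda\to\,!\Lambda$: CbN: $x^n=x$, $(\lambda x.M)^n=\lambda x.M^n$, $(MN)^n=M^n\,(!N^n)$. CbV: $x^v=\,!x$, $(\lambda x.M)^v=\,!(\lambda x.M^v)$, $(MN)^v=(\mathrm{der}\,M^v)\,N^v$. *)

(* Defs.v *)
(* Terms up to alpha-conversion are represented with de Bruijn indices. *)
From Stdlib Require Import Arith.

Inductive bterm : Type :=
| BVar : nat -> bterm
| BLam : bterm -> bterm
| BApp : bterm -> bterm -> bterm
| BDer : bterm -> bterm
| BBox : bterm -> bterm.

Fixpoint blift (k : nat) (t : bterm) : bterm :=
  match t with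
  | BVar n => if n <? k then BVar n else BVar (S n)
  | BLam t => BLam (blift (S k) t)
  | BApp t s => BApp (blift k t) (blift k s)
  | BDer t => BDer (blift k t)
  | BBox t => BBox (blift k t)
  end.

Fixpoint bsubst (k : nat) (s : bterm) (t : bterm) : bterm :=
  match t with
  | BVar n => if n =? k then s else if n <? k then BVar n else BVar (pred n)
  | BLam t => BLam (bsubst (S k) (blift 0 s) t)
  | BApp t1 t2 => BApp (bsubst k s t1) (bsubst k s t2)
  | BDer t => BDer (bsubst k s t)
  | BBox t => BBox (bsubst k s t)
  end.

Inductive bctx : Type :=
| BHole : bctx
| BCLam : bctx -> bctx
| BCAppL : bctx -> bterm -> bctx
| BCAppR : bterm -> bctx -> bctx
| BCDer : bctx -> bctx
| BCBox : bctx -> bctx.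

Fixpoint bplug (C : bctx) (t : bterm) : bterm :=
  match C with
  | BHole => t
  | BCLam C => BLam (bplug C t)
  | BCAppL C s => BApp (bplug C t) s
  | BCAppR s C => BApp s (bplug C t)
  | BCDer C => BDer (bplug C t)
  | BCBox C => BBox (bplug C t)
  end.

Fixpoint bground (C : bctx) : Prop :=
  match C with
  | BHole => True
  | BCLam C => bground C
  | BCAppL C _ => bground C
  | BCAppR _ C => bground C
  | BCDer C => bground C
  | BCBox _ => False
  end.

Inductive root_v : bterm -> bterm -> Prop :=
| root_v_intro : forall T S, root_v (BApp (BLam T) (BBox S)) (bsubst 0 S T).
Inductive root_d : bterm -> bterm -> Prop :=
| root_d_intro : forall T, root_d (BDer (BBox T)) T.
Definition root_b (T S : bterm) : Prop := root_v T S \/ root_d T S.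

Definition bstep (r : bterm -> bterm -> Prop) (T S : bterm) : Prop :=
  exists C T' S', T = bplug C T' /\ S = bplug C S' /\ r T' S'.
Definition wbstep (r : bterm -> bterm -> Prop) (T S : bterm) : Prop :=
  exists C T' S', bground C /\ T = bplug C T' /\ S = bplug C S' /\ r T' S'.

Definition step_v := bstep root_v.
Definition step_d := bstep root_d.
Definition step_b := bstep root_b.
Definition step_wv := wbstep root_v.
Definition step_wd := wbstep root_d.
Definition step_wb := wbstep root_b.

Inductive lterm : Type :=
| Var : nat -> lterm
| Lam : lterm -> lterm
| App : lterm -> lterm -> lterm.

Fixpoint llift (k : nat) (t : lterm) : lterm :=
  match t with
  | Var n => if n <? k then Var n else Var (S n)
  | Lam t => Lam (llift (S k) t)
  | App t s => App (llift k t) (llift k s)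
  end.

Fixpoint lsubst (k : nat) (s : lterm) (t : lterm) : lterm :=
  match t with
  | Var n => if n =? k then s else if n <? k then Var n else Var (pred n)
  | Lam t => Lam (lsubst (S k) (llift 0 s) t)
  | App t1 t2 => App (lsubst k s t1) (lsubst k s t2)
  end.

Definition is_value (t : lterm) : Prop :=
  match t with Var _ | Lam _ => True | App _ _ => False end.

Inductive lctx : Type :=
| LHole : lctx
| LCLam : lctx -> lctx
| LCAppL : lctx -> lterm -> lctx
| LCAppR : lterm -> lctx -> lctx.

Fixpoint lplug (C : lctx) (t : lterm) : lterm :=
  match C with
  | LHole => t
  | LCLam C => Lam (lplug C t)
  | LCAppL C s => App (lplug C t) s
  | LCAppR s C => App s (lplug C t)
  end.

Fixpoint cbn_ground (C : lctx) : Prop :=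
  match C with
  | LHole => True
  | LCLam C => cbn_ground C
  | LCAppL C _ => cbn_ground C
  | LCAppR _ _ => False
  end.

Fixpoint cbv_ground (C : lctx) : Prop :=
  match C with
  | LHole => True
  | LCLam _ => False
  | LCAppL C _ => cbv_ground C
  | LCAppR _ C => cbv_ground C
  end.

Inductive root_beta : lterm -> lterm -> Prop :=
| root_beta_intro : forall M N, root_beta (App (Lam M) N) (lsubst 0 N M).
Inductive root_betav : lterm -> lterm -> Prop :=
| root_betav_intro : forall M V, is_value V -> root_betav (App (Lam M) V) (lsubst 0 V M).

Definition step_beta (M N : lterm) : Prop :=
  exists C M' N', M = lplug C M' /\ N = lplug C N' /\ root_beta M' N'.
Definition step_betav (M N : lterm) : Prop :=
  exists C M' N', M = lplug C M' /\ N = lplug C N' /\ root_betav M' N'.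
Definition step_wbeta (M N : lterm) : Prop :=
  exists C M' N', cbn_ground C /\ M = lplug C M' /\ N = lplug C N' /\ root_beta M' N'.
Definition step_wbetav (M N : lterm) : Prop :=
  exists C M' N', cbv_ground C /\ M = lplug C M' /\ N = lplug C N' /\ root_betav M' N'.

Fixpoint cbn (t : lterm) : bterm :=
  match t with
  | Var n => BVar n
  | Lam M => BLam (cbn M)
  | App M N => BApp (cbn M) (BBox (cbn N))
  end.

Fixpoint cbv (t : lterm) : bterm :=
  match t with
  | Var n => BBox (BVar n)
  | Lam M => BBox (BLam (cbv M))
  | App M N => BApp (BDer (cbv M)) (cbv N)
  end.

(* Main.v *)
Require Import Defs.
From Stdlib Require Import Arith Lia.

Fixpoint bcomp (C D : bctx) : bctx :=
  match C with
  | BHole => D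
  | BCLam C => BCLam (bcomp C D)
  | BCAppL C s => BCAppL (bcomp C D) s
  | BCAppR s C => BCAppR s (bcomp C D)
  | BCDer C => BCDer (bcomp C D)
  | BCBox C => BCBox (bcomp C D)
  end.

Lemma bplug_comp : forall C D t, bplug (bcomp C D) t = bplug C (bplug D t).
Proof. induction C; intros; simpl; try rewrite IHC; reflexivity. Qed.

Lemma bground_comp : forall C D, bground C -> bground D -> bground (bcomp C D).
Proof. induction C; intros; simpl in *; auto. Qed.

Fixpoint cn (C : lctx) : bctx :=
  match C with
  | LHole => BHole
  | LCLam C => BCLam (cn C)
  | LCAppL C N => BCAppL (cn C) (BBox (cbn N))
  | LCAppR M C => BCAppR (cbn M) (BCBox (cn C))
  end.

Fixpoint cv (C : lctx) : bctx :=
  match C with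
  | LHole => BHole
  | LCLam C => BCBox (BCLam (cv C))
  | LCAppL C N => BCAppL (BCDer (cv C)) (cbv N)
  | LCAppR M C => BCAppR (BDer (cbv M)) (cv C)
  end.

Lemma cbn_plug : forall C t, cbn (lplug C t) = bplug (cn C) (cbn t).
Proof. induction C; intros; simpl; try rewrite IHC; reflexivity. Qed.
Lemma cbv_plug : forall C t, cbv (lplug C t) = bplug (cv C) (cbv t).
Proof. induction C; intros; simpl; try rewrite IHC; reflexivity. Qed.
Lemma cn_ground : forall C, cbn_ground C -> bground (cn C).
Proof. induction C; simpl; auto. Qed.
Lemma cv_ground : forall C, cbv_ground C -> bground (cv C).
Proof. induction C; simpl; auto. Qed.

Lemma cbn_lift : forall t k, cbn (llift k t) = blift k (cbn t).
Proof.
  induction t; intros; simpl.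
  - destruct (n <? k); reflexivity.
  - rewrite IHt; reflexivity.
  - rewrite IHt1, IHt2; reflexivity.
Qed.
Lemma cbv_lift : forall t k, cbv (llift k t) = blift k (cbv t).
Proof.
  induction t; intros; simpl.
  - destruct (n <? k); reflexivity.
  - rewrite IHt; reflexivity.
  - rewrite IHt1, IHt2; reflexivity.
Qed.

Lemma cbn_subst : forall M k N, cbn (lsubst k N M) = bsubst k (cbn N) (cbn M).
Proof.
  induction M; intros; simpl.
  - destruct (n =? k); [reflexivity|]. destruct (n <? k); reflexivity.
  - rewrite IHM, cbn_lift; reflexivity.
  - rewrite IHM1, IHM2; reflexivity.
Qed.

Definition vcontent (t : lterm) : bterm :=
  match t with Var n => BVar n | Lam P => BLam (cbv P) | App _ _ => BVar 0 end.

Lemma cbv_value : forall V, is_value V -> cbv V = BBox (vcontent V).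
Proof. destruct V; simpl; tauto. Qed.

Lemma value_lift : forall V k, is_value V -> is_value (llift k V).
Proof. destruct V; simpl; intros; auto. destruct (n <? k); simpl; auto. Qed.

Lemma vcontent_lift : forall V k, is_value V -> vcontent (llift k V) = blift k (vcontent V).
Proof.
  destruct V; simpl; intros; try tauto.
  - destruct (n <? k); reflexivity.
  - rewrite cbv_lift; reflexivity.
Qed.

Lemma cbv_subst : forall M k V, is_value V ->
  cbv (lsubst k V M) = bsubst k (vcontent V) (cbv M).
Proof.
  induction M; intros; simpl.
  - destruct (n =? k). apply cbv_value; auto. destruct (n <? k); reflexivity.
  - rewrite IHM, vcontent_lift; auto. apply value_lift; auto.
  - rewrite IHM1, IHM2; auto.
Qed.

Lemma v_to_b : forall T S, step_v T S -> step_b T S.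
Proof. intros T S [C [a [b [? [? ?]]]]]. exists C, a, b. unfold root_b; auto. Qed.
Lemma d_to_b : forall T S, step_d T S -> step_b T S.
Proof. intros T S [C [a [b [? [? ?]]]]]. exists C, a, b. unfold root_b; auto. Qed.
Lemma wv_to_wb : forall T S, step_wv T S -> step_wb T S.
Proof. intros T S [C [a [b [? [? [? ?]]]]]]. exists C, a, b. unfold root_b; auto. Qed.
Lemma wd_to_wb : forall T S, step_wd T S -> step_wb T S.
Proof. intros T S [C [a [b [? [? [? ?]]]]]]. exists C, a, b. unfold root_b; auto. Qed.

Lemma cbn_inv : forall M C T' S', cbn M = bplug C T' -> root_b T' S' ->
  exists LC M1 N1, M = lplug LC M1 /\ root_beta M1 N1 /\ root_v T' S' /\
    bplug C S' = cbn (lplug LC N1) /\ (bground C -> cbn_ground LC).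
Proof.
  induction M; intros C T' S' E R.
  - destruct C; simpl in E; try discriminate. subst.
    destruct R as [R|R]; inversion R.
  - destruct C; simpl in E; try discriminate.
    + subst. destruct R as [R|R]; inversion R.
    + injection E as E. destruct (IHM _ _ _ E R) as [LC [M1 [N1 [? [? [? [? ?]]]]]]].
      exists (LCLam LC), M1, N1. subst. simpl. repeat split; auto; try congruence; try (simpl; tauto).
  - destruct C; simpl in E; try discriminate.
    + subst. destruct R as [R|R]; inversion R; subst.
      destruct M1; simpl in H0; try discriminate. injection H0 as H0. subst.
      exists LHole, (App (Lam M1) M2), (lsubst 0 M2 M1). simpl.
      split; [reflexivity|split;[constructor|split;[exact R|split;[|simpl; auto]]]].
      rewrite cbn_subst. reflexivity.
    + injection E as E1 E2. destruct (IHM1 _ _ _ E1 R) as [LC [a0 [b0 [? [? [? [? ?]]]]]]].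
      exists (LCAppL LC M2), a0, b0. subst. simpl. repeat split; auto; try congruence; try (simpl; tauto).
    + injection E as E1 E2. destruct C; simpl in E2; try discriminate.
      * subst. destruct R as [R|R]; inversion R.
      * injection E2 as E2. destruct (IHM2 _ _ _ E2 R) as [LC [a0 [b0 [? [? [? [? ?]]]]]]].
        exists (LCAppR M1 LC), a0, b0. subst. simpl. repeat split; auto; try congruence; try (simpl; tauto).
Qed.

Lemma no_v_cbv : forall M C T' S', cbv M = bplug C T' -> root_v T' S' -> False.
Proof.
  induction M; intros C T' S' E R.
  - destruct C; simpl in E; try discriminate.
    + subst. inversion R.
    + injection E as E. destruct C; simpl in E; try discriminate. subst. inversion R.
  - destruct C; simpl in E; try discriminate.
    + subst. inversion R.
    + injection E as E. destruct C; simpl in E; try discriminate.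
      * subst. inversion R.
      * injection E as E. eauto.
  - destruct C; simpl in E; try discriminate.
    + subst. inversion R.
    + injection E as E1 E2. destruct C; simpl in E1; try discriminate.
      * subst. inversion R.
      * injection E1 as E1. eauto.
    + injection E as E1 E2. eauto.
Qed.

Lemma v_after_d : forall LC C V1 N T'' S'',
  bplug (cv LC) (BApp (vcontent V1) (cbv N)) = bplug C T'' -> root_v T'' S'' ->
  exists P, V1 = Lam P /\ is_value N /\
    bplug C S'' = bplug (cv LC) (cbv (lsubst 0 N P)) /\ (bground C -> cbv_ground LC).
Proof.
  induction LC; intros C V1 N T'' S'' E R; simpl in E.
  - destruct C; simpl in E; try discriminate.
    + subst. inversion R; subst.
      destruct V1; simpl in H0; try discriminate. injection H0 as H0.
      assert (HN : is_value N) by (destruct N; simpl in *; auto; discriminate).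
      exists V1. repeat split; auto. simpl. rewrite cbv_subst; auto.
      rewrite (cbv_value N HN) in H1. injection H1 as H1. congruence.
    + injection E as E1 E2. destruct V1; simpl in E1.
      * destruct C; simpl in E1; try discriminate. subst. inversion R.
      * destruct C; simpl in E1; try discriminate.
        -- subst. inversion R.
        -- injection E1 as E1. exfalso; eapply no_v_cbv; eauto.
      * destruct C; simpl in E1; try discriminate. subst. inversion R.
    + injection E as E1 E2. exfalso; eapply no_v_cbv; eauto.
  - destruct C; simpl in E; try discriminate.
    + subst. inversion R.
    + injection E as E. destruct C; simpl in E; try discriminate.
      * subst. inversion R.
      * injection E as E. destruct (IHLC _ _ _ _ _ E R) as [P [? [? [? ?]]]].
        exists P. simpl. repeat split; auto; try congruence; try (simpl; tauto).
  - destruct C; simpl in E; try discriminate.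
    + subst. inversion R.
    + injection E as E1 E2. destruct C; simpl in E1; try discriminate.
      * subst. inversion R.
      * injection E1 as E1. destruct (IHLC _ _ _ _ _ E1 R) as [P [? [? [? ?]]]].
        exists P. simpl. repeat split; auto; try congruence; try (simpl; tauto).
    + injection E as E1 E2. exfalso; eapply no_v_cbv; eauto.
  - destruct C; simpl in E; try discriminate.
    + subst. inversion R.
    + injection E as E1 E2. destruct C; simpl in E1; try discriminate.
      * subst. inversion R.
      * injection E1 as E1. exfalso; eapply no_v_cbv; eauto.
    + injection E as E1 E2. destruct (IHLC _ _ _ _ _ E2 R) as [P [? [? [? ?]]]].
      exists P. simpl. repeat split; auto; try congruence; try (simpl; tauto).
Qed.

Lemma d_inv : forall M C T' S', cbv M = bplug C T' -> root_d T' S' ->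
  exists LC V1 N, M = lplug LC (App V1 N) /\ is_value V1 /\
    bplug C S' = bplug (cv LC) (BApp (vcontent V1) (cbv N)) /\ (bground C -> cbv_ground LC).
Proof.
  induction M; intros C T' S' E R.
  - destruct C; simpl in E; try discriminate.
    + subst. inversion R.
    + injection E as E. destruct C; simpl in E; try discriminate. subst. inversion R.
  - destruct C; simpl in E; try discriminate.
    + subst. inversion R.
    + injection E as E. destruct C; simpl in E; try discriminate.
      * subst. inversion R.
      * injection E as E. destruct (IHM _ _ _ E R) as [LC [V1 [N [? [? [? ?]]]]]].
        exists (LCLam LC), V1, N. subst. simpl. repeat split; auto; try congruence; try (simpl; tauto).
  - destruct C; simpl in E; try discriminate.
    + subst. inversion R.
    + injection E as E1 E2. destruct C; simpl in E1; try discriminate.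
      * subst. inversion R; subst.
        assert (HV : is_value M1) by (destruct M1; simpl in *; auto; discriminate).
        exists LHole, M1, M2. simpl. repeat split; auto.
        rewrite (cbv_value M1 HV) in H0. injection H0 as H0. subst. reflexivity.
      * injection E1 as E1. destruct (IHM1 _ _ _ E1 R) as [LC [V1 [N [? [? [? ?]]]]]].
        exists (LCAppL LC M2), V1, N. subst. simpl. repeat split; auto; try congruence; try (simpl; tauto).
    + injection E as E1 E2. destruct (IHM2 _ _ _ E2 R) as [LC [V1 [N [? [? [? ?]]]]]].
      exists (LCAppR M1 LC), V1, N. subst. simpl. repeat split; auto; try congruence; try (simpl; tauto).
Qed.

Theorem mainTheorem1 : forall M : lterm,
  (* (1) CbN *)
  ((forall M', step_beta M M' -> step_v (cbn M) (cbn M') /\ step_b (cbn M) (cbn M')) /\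
   (forall S, step_b (cbn M) S ->
      step_v (cbn M) S /\ exists M', S = cbn M' /\ step_beta M M')) /\
  (* (2) ground CbN *)
  ((forall M', step_wbeta M M' -> step_wv (cbn M) (cbn M') /\ step_wb (cbn M) (cbn M')) /\
   (forall S, step_wb (cbn M) S ->
      step_wv (cbn M) S /\ exists M', S = cbn M' /\ step_wbeta M M')) /\
  (* (3) CbV *)
  ((forall M', step_betav M M' ->
      (exists S0, step_d (cbv M) S0 /\ step_v S0 (cbv M')) /\
      (exists S0, step_b (cbv M) S0 /\ step_b S0 (cbv M'))) /\
   (forall S0 S, step_d (cbv M) S0 -> step_v S0 S ->
      exists M', S = cbv M' /\ step_betav M M')) /\
  (* (4) ground CbV *)
  ((forall M', step_wbetav M M' ->
      (exists S0, step_wd (cbv M) S0 /\ step_wv S0 (cbv M')) /\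
      (exists S0, step_wb (cbv M) S0 /\ step_wb S0 (cbv M'))) /\
   (forall S0 S, step_wd (cbv M) S0 -> step_wv S0 S ->
      exists M', S = cbv M' /\ step_wbetav M M')).
Proof.
  intro M.
  assert (A1 : forall M', step_beta M M' -> step_v (cbn M) (cbn M')).
  { intros M' [C [a [b [-> [-> R]]]]]. destruct R as [P N].
    exists (cn C), (BApp (BLam (cbn P)) (BBox (cbn N))), (bsubst 0 (cbn N) (cbn P)).
    rewrite !cbn_plug, cbn_subst. simpl. repeat split; constructor. }
  assert (A2 : forall M', step_wbeta M M' -> step_wv (cbn M) (cbn M')).
  { intros M' [C [a [b [G [-> [-> R]]]]]]. destruct R as [P N].
    exists (cn C), (BApp (BLam (cbn P)) (BBox (cbn N))), (bsubst 0 (cbn N) (cbn P)).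
    rewrite !cbn_plug, cbn_subst. simpl. repeat split; try constructor. apply cn_ground; auto. }
  assert (A3 : forall M', step_betav M M' ->
      exists S0, step_d (cbv M) S0 /\ step_v S0 (cbv M')).
  { intros M' [C [a [b [-> [-> R]]]]]. destruct R as [P V H].
    exists (bplug (cv C) (BApp (BLam (cbv P)) (cbv V))). split.
    - exists (bcomp (cv C) (BCAppL BHole (cbv V))), (BDer (BBox (BLam (cbv P)))), (BLam (cbv P)).
      rewrite !bplug_comp, cbv_plug. simpl. repeat split; constructor.
    - exists (cv C), (BApp (BLam (cbv P)) (cbv V)), (bsubst 0 (vcontent V) (cbv P)).
      rewrite cbv_plug, cbv_subst by auto. repeat split.
      rewrite (cbv_value V H). constructor. }
  assert (A4 : forall M', step_wbetav M M' ->
      exists S0, step_wd (cbv M) S0 /\ step_wv S0 (cbv M')).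
  { intros M' [C [a [b [G [-> [-> R]]]]]]. destruct R as [P V H].
    exists (bplug (cv C) (BApp (BLam (cbv P)) (cbv V))). split.
    - exists (bcomp (cv C) (BCAppL BHole (cbv V))), (BDer (BBox (BLam (cbv P)))), (BLam (cbv P)).
      rewrite !bplug_comp, cbv_plug. simpl. repeat split; try constructor.
      apply bground_comp; simpl; auto. apply cv_ground; auto.
    - exists (cv C), (BApp (BLam (cbv P)) (cbv V)), (bsubst 0 (vcontent V) (cbv P)).
      rewrite cbv_plug, cbv_subst by auto. repeat split. apply cv_ground; auto.
      rewrite (cbv_value V H). constructor. }
  split; [|split; [|split]].
  - split.
    + intros M' H. split; auto. apply v_to_b; auto.
    + intros S [C [T' [S' [E1 [E2 R]]]]].
      destruct (cbn_inv M C T' S' E1 R) as [LC [M1 [N1 [? [? [? [? ?]]]]]]].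
      split. exists C, T', S'. auto.
      exists (lplug LC N1). split. congruence. exists LC, M1, N1. auto.
  - split.
    + intros M' H. split; auto. apply wv_to_wb; auto.
    + intros S [C [T' [S' [G [E1 [E2 R]]]]]].
      destruct (cbn_inv M C T' S' E1 R) as [LC [M1 [N1 [? [? [? [? ?]]]]]]].
      split. exists C, T', S'. auto.
      exists (lplug LC N1). split. congruence. exists LC, M1, N1. auto.
  - split.
    + intros M' H. split; auto. destruct (A3 M' H) as [S0 [? ?]].
      exists S0. split; [apply d_to_b|apply v_to_b]; auto.
    + intros S0 S [C [T' [S' [E1 [E2 R]]]]] [C2 [T'' [S'' [F1 [F2 R2]]]]].
      destruct (d_inv M C T' S' E1 R) as [LC [V1 [N [HM [HV [HS ?]]]]]].
      subst S0. rewrite HS in F1.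
      destruct (v_after_d LC C2 V1 N T'' S'' F1 R2) as [P [HP [HN [HS2 ?]]]].
      subst. exists (lplug LC (lsubst 0 N P)). split.
      rewrite cbv_plug; auto.
      exists LC, (App (Lam P) N), (lsubst 0 N P). repeat split; auto; try (constructor; auto).
  - split.
    + intros M' H. split; auto. destruct (A4 M' H) as [S0 [? ?]].
      exists S0. split; [apply wd_to_wb|apply wv_to_wb]; auto.
    + intros S0 S [C [T' [S' [G [E1 [E2 R]]]]]] [C2 [T'' [S'' [G2 [F1 [F2 R2]]]]]].
      destruct (d_inv M C T' S' E1 R) as [LC [V1 [N [HM [HV [HS HG]]]]]].
      subst S0. rewrite HS in F1.
      destruct (v_after_d LC C2 V1 N T'' S'' F1 R2) as [P [HP [HN [HS2 ?]]]].
      subst. exists (lplug LC (lsubst 0 N P)). split.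
      rewrite cbv_plug; auto.
      exists LC, (App (Lam P) N), (lsubst 0 N P). repeat split; auto; try (constructor; auto).
Qed.
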